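(* If $n\ge 8$ and $S=\{x_1,\dots,x_n\}$ is an $(n-7)$-fold GCD closed set of distinct positive integers, then the LCM matrix $[S]$ is nonsingular.
   Context: Let $T$ be a set of $n$ distinct positive integers and $r\in[1,n-1]$ an integer. $T$ is $r$-fold GCD closed if there is a divisor chain $R\subseteq T$ (a set totally ordered by divisibility) with $|R|=r$ such that $\max(R)$ divides $\min(T\setminus R)$ and $T\setminus R$ is GCD closed (i.e. $\gcd(x,y)\in T\setminus R$ for all $x,y\in T\setminus R$). The LCM matrix $[S]$ has $(i,j)$ entry $\mathrm{lcm}(x_i,x_j)$. *)

(* Defs.v *)
From mathcomp Require Import all_boot all_order all_algebra.
Set Implicit Arguments. Unset Strict Implicit. Unset Printing Implicit Defensive.
Import GRing.Theory.

(* A finite set of positive integers is represented by a duplicate-free seq nat. *)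

Definition gcd_closed (T : seq nat) : Prop :=
  forall x y, x \in T -> y \in T -> gcdn x y \in T.

Definition divisor_chain (R : seq nat) : Prop :=
  forall x y, x \in R -> y \in R -> (x %| y) || (y %| x).

(* Numerical maximum / minimum of a seq of nats (0 for the empty seq). *)
Definition seqmax (s : seq nat) : nat := \max_(x <- s) x.
Definition seqmin (s : seq nat) : nat := foldr minn (head 0 s) s.

(* T is r-fold GCD closed (T duplicate-free, r in [1, |T|-1]). *)
Definition r_fold_gcd_closed (r : nat) (T : seq nat) : Prop :=
  exists R : seq nat,
    [/\ uniq R /\ {subset R <= T}, size R = r, divisor_chain R,
        (seqmax R %| seqmin (filter (fun x => x \notin R) T))
      & gcd_closed (filter (fun x => x \notin R) T)].

Definition lcm_matrix (n : nat) (x : 'I_n -> nat) : 'M[rat]_n :=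
  \matrix_(i < n, j < n) ((lcmn (x i) (x j))%:R)%R.

(* Main.v *)
Require Import Defs.
From mathcomp Require Import all_boot all_order all_algebra.
From mathcomp Require Import zify ring lra.
Set Implicit Arguments. Unset Strict Implicit. Unset Printing Implicit Defensive.
Import Order.TTheory GRing.Theory Num.Theory.
Local Open Scope ring_scope.

Fixpoint gf (f z : nat) : rat :=
  match f with
  | 0 => 0
  | f'.+1 => (z%:R)^-1 - \sum_(1 <= d < z | (d %| z)%N) gf f' d
  end.

Lemma gf_stable f f' z : (z < f)%N -> (z < f')%N -> gf f z = gf f' z.
Proof.
elim: f f' z => [|f IH] [|f'] z //= hz hz'.
congr (_ - _); rewrite big_nat_cond [RHS]big_nat_cond.
apply: eq_bigr => d /andP[/andP[_ hd] _]; apply: IH; lia.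
Qed.

Definition gmu z := gf z.+1 z.

Lemma gmu_sum z : (0 < z)%N -> \sum_(1 <= d < z.+1 | (d %| z)%N) gmu d = (z%:R)^-1.
Proof.
move=> z0; rewrite big_mkcond big_nat_recr //= dvdnn -big_mkcond /=.
have -> : gmu z = (z%:R)^-1 - \sum_(1 <= d < z | (d %| z)%N) gf z d by [].
rewrite [X in _ + (_ - X)]big_nat_cond [X in X + _]big_nat_cond.
rewrite (eq_bigr (fun d => gf z d)); first by rewrite addrC subrK.
move=> d /andP[/andP[_ hd] _]; apply: gf_stable; lia.
Qed.

Lemma gmu_sumN N z : (0 < z)%N -> (z < N)%N ->
  \sum_(1 <= d < N | (d %| z)%N) gmu d = (z%:R)^-1.
Proof.
move=> z0 zN; rewrite (big_cat_nat (n:=z.+1)) //= gmu_sum //.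
rewrite [X in _ + X]big_nat_cond big1 ?addr0 //.
move=> d /andP[/andP[hd _] hdz]; have := dvdn_leq z0 hdz; lia.
Qed.

Definition cov N (Y : seq nat) : rat :=
  \sum_(1 <= d < N | has (dvdn d) Y) gmu d.

Lemma cov_nil N : cov N [::] = 0.
Proof. by rewrite /cov big_pred0. Qed.

Lemma cov_sing N y : (0 < y)%N -> (y < N)%N -> cov N [:: y] = (y%:R)^-1.
Proof.
move=> y0 yN; rewrite /cov -(gmu_sumN y0 yN); apply: eq_bigl => d /=.
by rewrite orbF.
Qed.

Lemma big_or_nat (r : seq nat) (P Q : pred nat) (F : nat -> rat) :
  \sum_(i <- r | P i || Q i) F i =
  \sum_(i <- r | P i) F i + \sum_(i <- r | Q i) F i - \sum_(i <- r | P i && Q i) F i.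
Proof.
elim: r => [|a r IH]; first by rewrite !big_nil; lra.
rewrite !big_cons IH; case: (P a); case: (Q a) => /=; lra.
Qed.

Lemma cov_cons N y Y :
  cov N (y :: Y) = cov N [:: y] + cov N Y - cov N (map (gcdn y) Y).
Proof.
rewrite /cov (eq_bigl (fun d => has (dvdn d) [:: y] || has (dvdn d) Y)); last first.
  by move=> d /=; rewrite orbF.
rewrite big_or_nat; congr (_ - _).
apply: eq_bigl => d /=; rewrite orbF has_map; apply/idP/hasP.
  by case/andP=> h1 /hasP[t tY h2]; exists t => //=; rewrite dvdn_gcd h1.
by case=> t tY /=; rewrite dvdn_gcd => /andP[h1 h2]; rewrite h1; apply/hasP; exists t.
Qed.

Lemma cov_eq N Y Y' : (forall d, (0 < d)%N -> has (dvdn d) Y = has (dvdn d) Y') ->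
  cov N Y = cov N Y'.
Proof.
move=> H; rewrite /cov big_nat_cond [RHS]big_nat_cond.
by apply: eq_bigl => -[|d] //=; rewrite H.
Qed.


Definition Aof N a Y : rat := (a%:R)^-1 - cov N Y.

Lemma dvd_lt2 (c y : nat) : (0 < y)%N -> (c %| y)%N -> c != y -> (2 * c <= y)%N.
Proof.
move=> y0 /dvdnP[q e]; subst y => hne.
have : (0 < q)%N by move: y0; rewrite muln_gt0 => /andP[].
have : q != 1%N by apply: contraNneq hne => ->; rewrite mul1n.
rewrite leq_mul2r; lia.
Qed.

Lemma inv_half (c y : nat) : (0 < c)%N -> (2 * c <= y)%N ->
  (y%:R : rat)^-1 <= (c%:R)^-1 / 2.
Proof.
move=> c0 h; have -> : (c%:R : rat)^-1 / 2 = ((2 * c)%:R)^-1.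
  by rewrite natrM invfM mulrC.
rewrite lef_pV2 ?posrE ?ltr0n ?ler_nat //; lia.
Qed.

Lemma inv_lt (c y : nat) : (0 < c)%N -> (c < y)%N -> (y%:R : rat)^-1 < (c%:R)^-1.
Proof. move=> c0 h; rewrite ltf_pV2 ?posrE ?ltr0n ?ltr_nat //; lia. Qed.

Lemma inv_pos (c : nat) : (0 < c)%N -> 0 < (c%:R : rat)^-1.
Proof. by move=> c0; rewrite invr_gt0 ltr0n. Qed.

Lemma base N a y1 y2 : (0 < a)%N -> (0 < y1)%N -> (y1 < N)%N -> (0 < y2)%N -> (y2 < N)%N ->
  ~~ (y1 %| y2)%N -> ~~ (y2 %| y1)%N -> 0 < Aof N a [:: y1; y2].
Proof.
move=> a0 p1 l1 p2 l2 n12 n21.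
set g := gcdn y1 y2.
have g0 : (0 < g)%N by rewrite gcdn_gt0 p1.
have gy1 : (g %| y1)%N by apply: dvdn_gcdl.
have gy2 : (g %| y2)%N by apply: dvdn_gcdr.
have gN : (g < N)%N by have := dvdn_leq p1 gy1; lia.
have h1 : (2 * g <= y1)%N.
  apply: dvd_lt2 => //; apply/eqP => e; move: n12; rewrite -e dvdn_gcdr //.
have h2 : (2 * g <= y2)%N.
  apply: dvd_lt2 => //; apply/eqP => e; move: n21; rewrite -e dvdn_gcdl //.
rewrite /Aof cov_cons /= !cov_sing //.
have := inv_half g0 h1; have := inv_half g0 h2; have := inv_pos a0.
lra.
Qed.

Lemma step N a y Y c : (0 < y)%N -> (y < N)%N -> c \in map (gcdn y) Y ->
  (forall t, t \in Y -> (gcdn y t %| c)%N) -> c != y ->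
  0 < Aof N a Y -> 0 < Aof N a (y :: Y).
Proof.
move=> y0 yN cin hc cy hA.
have [t tY ct] := mapP cin.
have c0 : (0 < c)%N by rewrite ct gcdn_gt0 y0.
have cley : (c <= y)%N by rewrite ct; apply: dvdn_leq => //; apply: dvdn_gcdl.
have clty : (c < y)%N by rewrite ltn_neqAle cy cley.
have E : cov N (map (gcdn y) Y) = cov N [:: c].
  apply: cov_eq => d d0 /=; rewrite orbF; apply/hasP/idP.
    by case=> z /mapP[t' t'Y ->] hd; apply: dvdn_trans hd (hc _ t'Y).
  by move=> hd; exists c.
move: hA; rewrite /Aof cov_cons E !cov_sing //; last lia.
have := inv_lt c0 clty; lra.
Qed.

Lemma chain_max (s : seq nat) : s != [::] ->
  (forall u v, u \in s -> v \in s -> (u %| v)%N || (v %| u)%N) ->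
  exists2 c, c \in s & forall u, u \in s -> (u %| c)%N.
Proof.
elim: s => // a s IH _ H.
case: s IH H => [|b s] IH H.
  by exists a; rewrite ?inE // => u; rewrite inE => /eqP ->.
have [c cin hc] : exists2 c, c \in b :: s & forall u, u \in b :: s -> (u %| c)%N.
  by apply: IH => // u v hu hv; apply: H; rewrite inE ?hu ?hv orbT.
have cin' : c \in a :: b :: s by rewrite inE cin orbT.
have /orP[ac|ca] := H a c (mem_head _ _) cin'.
  exists c; first by rewrite inE cin orbT.
  by move=> u; rewrite inE => /orP[/eqP ->|/hc].
exists a; first by rewrite inE eqxx.
by move=> u; rewrite inE => /orP[/eqP ->|/hc hu]; [apply: dvdnn | apply: dvdn_trans hu ca].
Qed.

Lemma Aof_eq N a Y Y' : Y =i Y' -> Aof N a Y = Aof N a Y'.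
Proof. by move=> h; rewrite /Aof (@cov_eq N Y Y') // => d _; apply: eq_has_r. Qed.


Lemma core N a M D :
  (0 < a)%N -> (a < N)%N -> uniq M -> (forall m, m \in M -> 0 < m)%N ->
  (forall m, m \in M -> m %| a)%N ->
  (forall u v, u \in M -> v \in M -> u %| v -> u = v)%N -> (2 <= size M)%N ->
  uniq D -> (size D <= 6)%N -> {subset M <= D} ->
  (forall u v, u \in D -> v \in D -> gcdn u v \in D) ->
  0 < Aof N a M.
Proof.
move=> a0 aN uM Mpos Mdiv Manti sM uD sD MD Dgcd.
set E := [seq d <- D | d \notin M].
have hE : (size E + size M <= 6)%N.
  have h1 : (size M <= count (mem M) D)%N.
    rewrite -size_filter; apply: uniq_leq_size => // m hm.
    by rewrite mem_filter; apply/andP; split => //; exact: MD.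
  have := count_predC (mem M) D; rewrite size_filter.
  have -> : count (fun d => d \notin M) D = count (predC (mem M)) D by [].
  lia.
have pe : forall e u v, e \in D -> u \in M -> v \in M -> u != v ->
    (e %| gcdn u v)%N -> e \in E.
  move=> e u v eD uM' vM uv he; rewrite mem_filter eD andbT.
  apply/negP => eM.
  have eu : e = u by apply: Manti => //; apply: dvdn_trans he (dvdn_gcdl _ _).
  have ev : e = v by apply: Manti => //; apply: dvdn_trans he (dvdn_gcdr _ _).
  by move: uv; rewrite -eu -ev eqxx.
have ED : {subset E <= D} by move=> e; rewrite /E mem_filter => /andP[].
have pg : forall u v, u \in M -> v \in M -> u != v -> gcdn u v \in E.
  move=> u v hu hv uv; apply: (pe _ u v) => //; by apply: Dgcd; apply: MD.
have MN : forall m, m \in M -> (m < N)%N.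
  by move=> m hm; have := dvdn_leq a0 (Mdiv m hm); lia.
have anti : forall u v, u \in M -> v \in M -> u != v -> ~~ (u %| v)%N.
  by move=> u v hu hv uv; apply/negP => /(Manti _ _ hu hv) e; move: uv; rewrite e eqxx.
have base' : forall u v, u \in M -> v \in M -> u != v -> 0 < Aof N a [:: u; v].
  move=> u v hu hv uv; apply: base => //; try by [apply: Mpos | apply: MN].
    by apply: anti.
  by apply: anti; rewrite // eq_sym.
have gneq : forall y t, y \in M -> t \in M -> y != t -> gcdn y t != y.
  move=> y t hy ht yt; apply/eqP => e; have := anti _ _ hy ht yt.
  by rewrite -e dvdn_gcdr.
have H3 : forall y p q, y \in M -> p \in M -> q \in M -> y != p -> y != q -> p != q ->
    (gcdn y p %| gcdn y q)%N || (gcdn y q %| gcdn y p)%N -> 0 < Aof N a [:: y; p; q].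
  move=> y p q hy hp hq yp yq pq /orP[h|h].
    apply: (@step _ _ _ _ (gcdn y q)); rewrite ?Mpos ?MN //.
    - by rewrite /= !inE eqxx orbT.
    - by move=> t; rewrite !inE => /orP[/eqP->|/eqP->] //.
    - exact: gneq.
    - exact: base'.
  apply: (@step _ _ _ _ (gcdn y p)); rewrite ?Mpos ?MN //.
  - by rewrite /= !inE eqxx.
  - by move=> t; rewrite !inE => /orP[/eqP->|/eqP->] //.
  - exact: gneq.
  - exact: base'.
case: M uM Mpos Mdiv Manti sM MD E hE pe ED pg MN anti base' gneq H3 =>
  [|m1 [|m2 [|m3 [|m4 M']]]] // uM Mpos Mdiv Manti sM MD E hE pe ED pg MN anti base' gneq H3.
- by apply: base'; rewrite ?inE ?eqxx ?orbT //; move: uM; rewrite /= inE andbT.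
- move: uM; rewrite /= !inE !negb_or => /andP[/andP[n12 n13] /andP[n23 _]].
  have h1 : m1 \in [:: m1; m2; m3] by rewrite !inE eqxx.
  have h2 : m2 \in [:: m1; m2; m3] by rewrite !inE eqxx orbT.
  have h3 : m3 \in [:: m1; m2; m3] by rewrite !inE eqxx !orbT.
  have E12 := pg _ _ h1 h2 n12; have E13 := pg _ _ h1 h3 n13.
  have E23 := pg _ _ h2 h3 n23.
  have Ew : gcdn (gcdn m1 m2) (gcdn m1 m3) \in E.
    by apply: (pe _ m1 m2) => //; [apply: Dgcd; apply: ED | apply: dvdn_gcdl].
  have sE : (size E <= 3)%N by move: hE => /=; lia.
  have P213 : 0 < Aof N a [:: m2; m1; m3] ->  0 < Aof N a [:: m1; m2; m3].
    rewrite (@Aof_eq N a [:: m1; m2; m3] [:: m2; m1; m3]) //.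
    by move=> t; rewrite !inE; case: (t == m1); case: (t == m2); case: (t == m3).
  have P312 : 0 < Aof N a [:: m3; m1; m2] ->  0 < Aof N a [:: m1; m2; m3].
    rewrite (@Aof_eq N a [:: m1; m2; m3] [:: m3; m1; m2]) //.
    by move=> t; rewrite !inE; case: (t == m1); case: (t == m2); case: (t == m3).
  have c21 : gcdn m2 m1 = gcdn m1 m2 by rewrite gcdnC.
  have c31 : gcdn m3 m1 = gcdn m1 m3 by rewrite gcdnC.
  have c32 : gcdn m3 m2 = gcdn m2 m3 by rewrite gcdnC.
  have H123 : (gcdn m1 m2 %| gcdn m1 m3)%N || (gcdn m1 m3 %| gcdn m1 m2)%N ->
      0 < Aof N a [:: m1; m2; m3].
    by apply: H3.
  have H213 : (gcdn m1 m2 %| gcdn m2 m3)%N || (gcdn m2 m3 %| gcdn m1 m2)%N ->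
      0 < Aof N a [:: m1; m2; m3].
    move=> h; apply: P213; apply: H3; rewrite // 1?eq_sym // c21 //.
  have H312 : (gcdn m1 m3 %| gcdn m2 m3)%N || (gcdn m2 m3 %| gcdn m1 m3)%N ->
      0 < Aof N a [:: m1; m2; m3].
    move=> h; apply: P312; apply: H3; rewrite // 1?eq_sym // c31 c32 //.
  case: (eqVneq (gcdn m1 m2) (gcdn m1 m3)) => [e|n1].
    by apply: H123; rewrite e dvdnn.
  case: (eqVneq (gcdn m1 m2) (gcdn m2 m3)) => [e|n2].
    by apply: H213; rewrite e dvdnn.
  case: (eqVneq (gcdn m1 m3) (gcdn m2 m3)) => [e|n3].
    by apply: H312; rewrite e dvdnn.
  set w := gcdn (gcdn m1 m2) (gcdn m1 m3) in Ew.
  case: (eqVneq w (gcdn m1 m2)) => [e|w1].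
    by apply: H123; rewrite -e dvdn_gcdr.
  case: (eqVneq w (gcdn m1 m3)) => [e|w2].
    by apply: H123; rewrite -e dvdn_gcdl orbT.
  case: (eqVneq w (gcdn m2 m3)) => [e|w3].
    by apply: H213; rewrite -e /w dvdn_gcdl orbT.
  have : (size [:: gcdn m1 m2; gcdn m1 m3; gcdn m2 m3; w] <= size E)%N.
    apply: uniq_leq_size.
      by rewrite /= !inE !negb_or n1 n2 n3 (eq_sym (gcdn m1 m2) w) (eq_sym (gcdn m1 m3) w) (eq_sym (gcdn m2 m3) w) w1 w2 w3.
    by move=> t; rewrite !inE => /or4P[] /eqP ->.
  by move=> /= h; have := leq_trans h sE.
- set M0 := [:: m1, m2, m3, m4 & M'] in uM Mpos Mdiv Manti sM MD E hE pe ED pg MN anti base' gneq H3 *.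
  have sE : (size E <= 2)%N by move: hE => /=; lia.
  have comp : forall y t1 t2, y \in M0 -> t1 \in M0 -> t2 \in M0 -> y != t1 -> y != t2 ->
      (gcdn y t1 %| gcdn y t2)%N || (gcdn y t2 %| gcdn y t1)%N.
    move=> y t1 t2 hy ht1 ht2 yt1 yt2.
    set g1 := gcdn y t1; set g2 := gcdn y t2.
    case: (eqVneq g1 g2) => [->|n]; first by rewrite dvdnn.
    have hg1 := pg _ _ hy ht1 yt1; have hg2 := pg _ _ hy ht2 yt2.
    have hh : gcdn g1 g2 \in E.
      by apply: (pe _ y t1) => //; [apply: Dgcd; apply: ED | apply: dvdn_gcdl].
    case: (eqVneq (gcdn g1 g2) g1) => [e1|k1]; first by rewrite -e1 dvdn_gcdr.
    case: (eqVneq (gcdn g1 g2) g2) => [e2|k2]; first by rewrite -e2 dvdn_gcdl orbT.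
    have : (size [:: g1; g2; gcdn g1 g2] <= size E)%N.
      apply: uniq_leq_size.
        by rewrite /= !inE !negb_or n (eq_sym g1 (gcdn g1 g2)) (eq_sym g2 (gcdn g1 g2)) k1 k2.
      by move=> t; rewrite !inE => /or3P[] /eqP ->.
    by move=> /= h; have := leq_trans h sE.
  have gen : forall Y, uniq Y -> {subset Y <= M0} -> (2 <= size Y)%N -> 0 < Aof N a Y.
    elim=> [|y Y IH] // /andP[yY uY] sub sY.
    have hy : y \in M0 by apply: sub; rewrite inE eqxx.
    have subY : {subset Y <= M0} by move=> t ht; apply: sub; rewrite inE ht orbT.
    case: Y yY uY subY sY IH sub => [|t [|t' Y']] // yY uY subY sY IH sub.
      apply: base' => //; first by apply: subY; rewrite inE eqxx.
      by move: yY; rewrite inE.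
    have cmp : forall u v, u \in map (gcdn y) [:: t, t' & Y'] ->
        v \in map (gcdn y) [:: t, t' & Y'] -> (u %| v)%N || (v %| u)%N.
      move=> u v hu hv.
      case/mapP: hu => t1 ht1 ->; case/mapP: hv => t2 ht2 ->.
      apply: comp => //; try by apply: subY.
        by apply: contraNneq yY => ->.
      by apply: contraNneq yY => ->.
    have [c cin hc] := @chain_max (map (gcdn y) [:: t, t' & Y']) isT cmp.
    apply: (@step _ _ _ _ c); rewrite ?Mpos ?MN //.
    - by move=> u hu; apply: hc; apply: map_f.
    - case/mapP: cin => u hu ->; apply: gneq => //; first by apply: subY.
      by apply: contraNneq yY => ->.
    - by apply: IH.
  by apply: gen.
Qed.


Definition pdivs (S : seq nat) a := [seq y <- S | (y %| a)%N && (y != a)].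

Definition alpha N S a : rat :=
  \sum_(1 <= d < N | (d %| a)%N && ~~ has (dvdn d) (pdivs S a)) gmu d.

Lemma alpha_A N S a : (0 < a)%N -> (a < N)%N -> alpha N S a = Aof N a (pdivs S a).
Proof.
move=> a0 aN; rewrite /alpha /Aof.
rewrite -(gmu_sumN a0 aN) [X in _ = X - _](bigID (fun d => has (dvdn d) (pdivs S a))) /=.
rewrite [X in _ = X + _ - _](_ : _ = cov N (pdivs S a)); first by rewrite addrC addKr.
apply: eq_bigl => d /=; case h: (has _ _); rewrite ?andbF ?andbT //.
case/hasP: h => y; rewrite mem_filter => /andP[/andP[ya _] _] dy.
exact: dvdn_trans dy ya.
Qed.

Definition maxels (Y : seq nat) :=
  [seq y <- Y | all (fun z => (y %| z)%N ==> (y == z)) Y].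

Lemma maxels_cover Y y : (forall t, t \in Y -> 0 < t)%N -> y \in Y ->
  exists2 m, m \in maxels Y & (y %| m)%N.
Proof.
move=> Ypos.
set B := \max_(t <- Y) t.
suff H : forall k y, (B - y < k)%N -> y \in Y -> exists2 m, m \in maxels Y & (y %| m)%N.
  by move=> yY; apply: (H (B - y).+1 y (ltnSn _) yY).
elim=> [|k IH] w hk wY //.
case hm: (all (fun z => (w %| z)%N ==> (w == z)) Y).
  by exists w; rewrite ?dvdnn // mem_filter hm.
case/negbT/allPn: hm => z zY; rewrite negb_imply => /andP[yz nyz].
have z0 := Ypos z zY.
have lyz : (w < z)%N by rewrite ltn_neqAle nyz (dvdn_leq z0 yz).
have zB : (z <= B)%N by apply: (@leq_bigmax_seq _ _ xpredT (fun t => t)).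
have [m mM zm] := IH z ltac:(lia) zY.
by exists m => //; apply: dvdn_trans yz zm.
Qed.

Lemma maxels_sub Y : {subset maxels Y <= Y}.
Proof. by move=> m; rewrite mem_filter => /andP[]. Qed.

Lemma maxels_anti Y u v : u \in maxels Y -> v \in Y -> (u %| v)%N -> u = v.
Proof.
rewrite mem_filter => /andP[/allP h _] vY uv.
by have /implyP/(_ uv)/eqP := h v vY.
Qed.

Lemma cov_maxels N Y : (forall t, t \in Y -> 0 < t)%N -> cov N Y = cov N (maxels Y).
Proof.
move=> Ypos; apply: cov_eq => d d0; apply/hasP/hasP.
  case=> y yY dy; have [m mM ym] := maxels_cover Ypos yY.
  by exists m => //; apply: dvdn_trans dy ym.
by case=> m mM dm; exists m => //; apply: maxels_sub.
Qed.

Lemma alpha_neq0 N S a : uniq S -> (forall t, t \in S -> 0 < t)%N -> (0 < a)%N -> (a < N)%N ->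
  ((2 <= size (maxels (pdivs S a)))%N -> exists D, [/\ uniq D, (size D <= 6)%N,
      {subset maxels (pdivs S a) <= D} & forall u v, u \in D -> v \in D -> gcdn u v \in D]) ->
  alpha N S a != 0.
Proof.
move=> uS Spos a0 aN HD.
have Ppos : forall t, t \in pdivs S a -> (0 < t)%N.
  by move=> t; rewrite mem_filter => /andP[_ /Spos].
have Pdiv : forall t, t \in pdivs S a -> (t %| a)%N && (t != a).
  by move=> t; rewrite mem_filter => /andP[].
rewrite alpha_A // /Aof cov_maxels //.
have Mpos : forall t, t \in maxels (pdivs S a) -> (0 < t)%N.
  by move=> t /maxels_sub /Ppos.
have Mdiv : forall t, t \in maxels (pdivs S a) -> (t %| a)%N && (t != a).
  by move=> t /maxels_sub /Pdiv.
case E: (maxels (pdivs S a)) => [|m [|m' M']].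
- by rewrite cov_nil subr0 invr_eq0 pnatr_eq0 -lt0n.
- rewrite E in Mpos Mdiv.
  have /andP[ma mna] := Mdiv m (mem_head _ _).
  have m0 := Mpos m (mem_head _ _).
  have mlt : (m < a)%N by rewrite ltn_neqAle mna (dvdn_leq a0 ma).
  rewrite cov_sing //; last by lia.
  by rewrite subr_eq0 lt_eqF // inv_lt.
- have [D [uD sD MD Dg]] : exists D, _ := HD ltac:(by rewrite E).
  rewrite -E.
  apply: lt0r_neq0; apply: (@core N a (maxels (pdivs S a)) D) => //.
  + by rewrite /maxels !filter_uniq.
  + by move=> t /Mdiv /andP[].
  + move=> u v hu hv; apply: maxels_anti hu (maxels_sub hv).
  + by rewrite E.
Qed.


Definition Sx n (x : 'I_n -> nat) := [seq x i | i <- enum 'I_n].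

Lemma memSx n (x : 'I_n -> nat) i : x i \in Sx x.
Proof. by apply: map_f; rewrite mem_enum. Qed.

Lemma inSx n (x : 'I_n -> nat) y : y \in Sx x -> exists i, y = x i.
Proof. by case/mapP => i _ ->; exists i. Qed.

Lemma alpha_sum n (x : 'I_n -> nat) N : injective x -> (forall i, 0 < x i)%N ->
  (forall i, x i < N)%N -> (forall i j, exists l, gcdn (x i) (x j) = x l) ->
  forall l, \sum_(k | (x k %| x l)%N) alpha N (Sx x) (x k) = ((x l)%:R)^-1.
Proof.
move=> inj xpos xN gcl l.
rewrite -(gmu_sumN (xpos l) (xN l)).
rewrite /alpha.
under eq_bigr => k _ do rewrite big_mkcond.
rewrite exchange_big /= [RHS]big_mkcond /=.
apply: eq_big_nat => d /andP[d1 dN].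
rewrite -big_mkcondr /=.
case: (boolP (d %| x l)%N) => dz; last first.
  apply: big1 => k /andP[kz /andP[dk _]].
  by move: dz; rewrite (dvdn_trans dk kz).
case: (@arg_minnP _ l (fun k => (x k %| x l)%N && (d %| x k)%N) x) => [|k0].
  by rewrite dvdnn dz.
move=> /andP[k0z dk0] hmin.
have unc : ~~ has (dvdn d) (pdivs (Sx x) (x k0)).
  apply/hasP => -[y]; rewrite mem_filter => /andP[/andP[yk yne] yS] dy.
  have [t et] := inSx yS; subst y.
  have := hmin t; rewrite (dvdn_trans yk k0z) dy => /(_ isT) h.
  have := dvdn_leq (xpos k0) yk; rewrite leq_eqVlt (negbTE yne) /=; lia.
rewrite (big_pred1 k0) //.
move=> k /=; apply/idP/eqP; last by move->; rewrite k0z dk0 unc.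
case/and3P=> kz dk unck.
have [t et] := gcl k k0.
have dg : (d %| gcdn (x k) (x k0))%N by rewrite dvdn_gcd dk dk0.
have g1 : gcdn (x k) (x k0) = x k.
  apply/eqP; apply: contraNT unck => ne; apply/hasP.
  exists (gcdn (x k) (x k0)) => //.
  by rewrite mem_filter dvdn_gcdl ne et memSx.
have g2 : gcdn (x k) (x k0) = x k0.
  rewrite gcdnC; apply/eqP; apply: contraNT unc => ne; apply/hasP.
  exists (gcdn (x k0) (x k)); last by rewrite gcdnC.
  by rewrite mem_filter dvdn_gcdl ne gcdnC et memSx.
by apply: inj; rewrite -g1 g2.
Qed.

Lemma kernel n (x : 'I_n -> nat) N : injective x -> (forall i, 0 < x i)%N ->
  (forall i, x i < N)%N -> (forall i j, exists l, gcdn (x i) (x j) = x l) ->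
  (forall i, alpha N (Sx x) (x i) != 0) ->
  forall w : 'I_n -> rat,
  (forall j, \sum_i w i * ((gcdn (x i) (x j))%:R)^-1 = 0) -> forall i, w i = 0.
Proof.
move=> inj xpos xN gcl anz w hw.
pose W k := \sum_(i | (x k %| x i)%N) w i.
have E1 : forall j, \sum_i w i * ((gcdn (x i) (x j))%:R)^-1 =
    \sum_(k | (x k %| x j)%N) alpha N (Sx x) (x k) * W k.
  move=> j.
  transitivity (\sum_i \sum_(k | (x k %| x j)%N)
      (if (x k %| x i)%N then alpha N (Sx x) (x k) * w i else 0)).
    apply: eq_bigr => i _.
    have [l el] := gcl i j; rewrite el -(@alpha_sum n x N) // big_distrr /=.
    rewrite -el big_mkcond [RHS]big_mkcond /=.
    apply: eq_bigr => k _; rewrite dvdn_gcd.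
    by case: (x k %| x i)%N; case: (x k %| x j)%N; rewrite //= mulrC.
  rewrite exchange_big /=; apply: eq_bigr => k _.
  by rewrite /W big_distrr /= [RHS]big_mkcond.
have E2 : forall m j, (x j < m)%N -> alpha N (Sx x) (x j) * W j = 0.
  elim=> [//|m IH] j hj.
  have := hw j; rewrite E1 (bigD1 j) ?dvdnn //= big1 ?addr0 //.
  move=> k /andP[kj kne]; rewrite IH //.
  have : x k != x j by apply: contra kne => /eqP/inj ->.
  have := dvdn_leq (xpos j) kj; lia.
have E3 : forall j, W j = 0.
  move=> j; have := E2 (x j).+1 j (ltnSn _).
  by move/eqP; rewrite mulf_eq0 (negbTE (anz j)) /= => /eqP.
have E4 : forall m i, (N - x i < m)%N -> w i = 0.
  elim=> [//|m IH] i hi.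
  have := E3 i; rewrite /W (bigD1 i) ?dvdnn //= big1 ?addr0 //.
  move=> k /andP[ik kne]; apply: IH.
  have : x k != x i by apply: contra kne => /eqP/inj ->.
  have := dvdn_leq (xpos k) ik; have := xN k; lia.
by move=> i; apply: (E4 (N - x i).+1).
Qed.

Local Close Scope ring_scope.


Lemma bigmax_in (s : seq nat) : s != [::] -> \max_(t <- s) t \in s.
Proof.
elim: s => // a s IH _.
case: s IH => [|b s] IH; first by rewrite big_cons big_nil maxn0 mem_head.
have hm := IH isT.
have -> : \max_(t <- a :: b :: s) t = maxn a (\max_(t <- b :: s) t) by rewrite big_cons.
case: (leqP a (\max_(t <- b :: s) t)) => h.
  by rewrite inE hm orbT.
by rewrite mem_head.
Qed.

Lemma foldr_minn_in a s : foldr minn a s \in a :: s.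
Proof.
elim: s => [|b s IH] /=; first by rewrite mem_head.
case: (leqP b (foldr minn a s)) => h.
  by rewrite !inE eqxx orbT.
move: IH; rewrite !inE => /orP[->|->] //; by rewrite !orbT.
Qed.

Lemma foldr_minn_le a s t : t \in a :: s -> (foldr minn a s <= t)%N.
Proof.
elim: s t => [|b s IH] t /=; first by rewrite inE => /eqP ->.
rewrite !inE => /or3P[/eqP ->|/eqP ->|ts].
- by have := IH a (mem_head _ _); rewrite geq_min => ->; rewrite orbT.
- by rewrite geq_min leqnn.
- by have := IH t ltac:(by rewrite inE ts orbT); rewrite geq_min => ->; rewrite orbT.
Qed.

Lemma seqmin_in s : s != [::] -> seqmin s \in s.
Proof.
case: s => // a s _; rewrite /seqmin /=.
have := foldr_minn_in a (a :: s); rewrite /= inE => /orP[/eqP->|] //.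
by rewrite mem_head.
Qed.

Lemma seqmin_le s t : t \in s -> (seqmin s <= t)%N.
Proof.
case: s => // a s ts; rewrite /seqmin /=.
by apply: (foldr_minn_le (s := a :: s)); rewrite inE ts orbT.
Qed.


Lemma struct_D (S R : seq nat) a :
  uniq S -> (forall t, t \in S -> 0 < t) -> {subset R <= S} ->
  (forall r g, r \in R -> g \in [seq y <- S | y \notin R] -> r %| g) ->
  divisor_chain R -> gcd_closed [seq y <- S | y \notin R] ->
  size [seq y <- S | y \notin R] <= 7 -> a \in S -> 0 < a ->
  2 <= size (maxels (pdivs S a)) ->
  exists D, [/\ uniq D, size D <= 6, {subset maxels (pdivs S a) <= D} &
    forall u v, u \in D -> v \in D -> gcdn u v \in D].
Proof.
move=> uS Spos RS hRG chR Gcl sG aS a0 sM.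
set G := [seq y <- S | y \notin R] in hRG Gcl sG *.
set M := maxels (pdivs S a) in sM *.
have MP : forall m, m \in M -> [/\ m \in S, m %| a & m != a].
  move=> m /maxels_sub; rewrite mem_filter => /andP[/andP[h1 h2] h3]; by split.
have anti : forall u v, u \in M -> v \in M -> u %| v -> u = v.
  by move=> u v hu hv; apply: maxels_anti hu (maxels_sub hv).
have uM : uniq M by rewrite /M /maxels !filter_uniq.
have two : forall m, m \in M -> exists2 m', m' \in M & m' != m.
  move=> m hm; case: (boolP (all (fun m' => m' == m) M)) => [/allP h|/allPn[m' hm' ne]]; last by exists m'.
  have : size M <= size [:: m].
    by apply: uniq_leq_size => // t /h /eqP ->; rewrite mem_head.
  by move=> /=; lia.
have MG : forall m, m \in M -> m \in G.
  move=> m hm; have [mS _ _] := MP m hm.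
  rewrite mem_filter mS andbT; apply/negP => mR.
  have [m' hm' ne] := two m hm; have [m'S _ _] := MP m' hm'.
  case m'R : (m' \in R).
    case/orP: (chR m m' mR m'R) => h.
      by move: ne; rewrite (anti _ _ hm hm' h) eqxx.
    by move: ne; rewrite (anti _ _ hm' hm h) eqxx.
  have : m' \in G by rewrite mem_filter m'R m'S.
  move/(hRG m m' mR) => h; by move: ne; rewrite (anti _ _ hm hm' h) eqxx.
have [m0 hm0] : exists m0, m0 \in M.
  by exists (nth 0 M 0); apply: mem_nth; apply: leq_trans sM.
have aG : a \in G.
  rewrite mem_filter aS andbT; apply/negP => aR.
  have [_ m0a m0ne] := MP m0 hm0.
  have := hRG a m0 aR (MG m0 hm0) => am0.
  by move: m0ne; rewrite eqn_dvd m0a am0.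
exists [seq y <- G | (y %| a) && (y != a)]; split.
- by rewrite !filter_uniq.
- rewrite size_filter -ltnS (leq_trans _ sG) //.
  rewrite -(count_predC (fun y => (y %| a) && (y != a)) G).
  rewrite -{1}[count _ G]addn0 ltn_add2l -has_count.
  by apply/hasP; exists a => //=; rewrite eqxx andbF.
- move=> m hm; have [_ h1 h2] := MP m hm; by rewrite mem_filter h1 h2 MG.
- move=> u v; rewrite mem_filter => /andP[/andP[ua une] uG].
  rewrite mem_filter => /andP[/andP[va vne] vG].
  rewrite mem_filter (Gcl u v uG vG) (dvdn_trans (dvdn_gcdl u v) ua) andbT /=.
  have ult : u < a by rewrite ltn_neqAle une (dvdn_leq a0 ua).
  have : gcdn u v <= u.
    apply: dvdn_leq; last by apply: dvdn_gcdl.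
    by apply: Spos; move: uG; rewrite mem_filter => /andP[].
  lia.
Qed.


Lemma lcmE (a b : nat) : 0 < a -> 
  ((lcmn a b)%:R : rat) = (a%:R * b%:R / (gcdn a b)%:R)%R.
Proof.
move=> a0; have g0 : ((gcdn a b)%:R : rat) != 0%R by rewrite pnatr_eq0 -lt0n gcdn_gt0 a0.
by rewrite -natrM -muln_lcm_gcd natrM mulfK.
Qed.

Theorem corollary4p5 (n : nat) (x : 'I_n -> nat) :
  8 <= n ->
  injective x ->
  (forall i, 0 < x i) ->
  r_fold_gcd_closed (n - 7) [seq x i | i <- enum 'I_n] ->
  (\det (lcm_matrix x) != 0)%R.
Proof.
move=> n8 inj xpos [R [[uR RS] sR chR hdiv Gcl]].
have uS : uniq (Sx x) by rewrite /Sx map_inj_uniq ?enum_uniq.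
have Spos : forall t, t \in Sx x -> 0 < t by move=> t /inSx [i ->].
change [seq x i | i <- enum 'I_n] with (Sx x) in RS.
change [seq x i | i <- enum 'I_n] with (Sx x) in hdiv.
change [seq x i | i <- enum 'I_n] with (Sx x) in Gcl.
set G := [seq y <- Sx x | y \notin R] in hdiv Gcl.
have sG : size G <= 7.
  have h1 : size R <= count (mem R) (Sx x).
    rewrite -size_filter; apply: uniq_leq_size => // t tR.
    by rewrite mem_filter; apply/andP; split => //; apply: RS.
  have h2 := count_predC (mem R) (Sx x).
  have h3 : size (Sx x) = n by rewrite size_map size_enum_ord.
  have -> : size G = count (predC (mem R)) (Sx x) by rewrite size_filter.
  have h4 : count (mem R) (Sx x) + count (predC (mem R)) (Sx x) = n by rewrite h2 h3.
  clear h2 h3; lia.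
have hRG : forall r g, r \in R -> g \in G -> r %| g.
  move=> r g rR gG.
  have R0 : R != [::] by apply/eqP => e; rewrite e in rR.
  have mR : seqmax R \in R by apply: bigmax_in.
  have r0 : 0 < r by apply: Spos; apply: RS.
  have rle : r <= seqmax R by apply: (@leq_bigmax_seq _ _ xpredT (fun t => t)).
  have rdiv : r %| seqmax R.
    case/orP: (chR r (seqmax R) rR mR) => // h.
    have := dvdn_leq r0 h => h'.
    by have -> : seqmax R = r by apply/eqP; rewrite eqn_leq h' rle.
  have G0 : G != [::] by apply/eqP => e; rewrite e in gG.
  have mG := seqmin_in G0.
  have m0 : 0 < seqmin G by apply: Spos; move: mG; rewrite mem_filter => /andP[].
  have mdiv : seqmin G %| g.
    have gc := Gcl _ _ mG gG.
    have h1 := seqmin_le gc.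
    have h2 : gcdn (seqmin G) g <= seqmin G by apply: dvdn_leq m0 (dvdn_gcdl _ _).
    have e : gcdn (seqmin G) g = seqmin G by apply/eqP; rewrite eqn_leq h1 h2.
    by rewrite -e dvdn_gcdr.
  exact: dvdn_trans rdiv (dvdn_trans hdiv mdiv).
have Scl : forall u v, u \in Sx x -> v \in Sx x -> gcdn u v \in Sx x.
  move=> u v uS' vS'; case uinR: (u \in R); case vinR: (v \in R).
  - by case/orP: (chR u v uinR vinR) => [/gcdn_idPl -> | /gcdn_idPr ->].
  - have vG : v \in G by rewrite mem_filter vinR vS'.
    by move/gcdn_idPl: (hRG u v uinR vG) => ->.
  - have uG : u \in G by rewrite mem_filter uinR uS'.
    by move/gcdn_idPr: (hRG v u vinR uG) => ->.
  - have uG : u \in G by rewrite mem_filter uinR uS'.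
    have vG : v \in G by rewrite mem_filter vinR vS'.
    by have := Gcl u v uG vG; rewrite mem_filter => /andP[].
have gcl : forall i j, exists l, gcdn (x i) (x j) = x l.
  by move=> i j; apply: inSx; apply: Scl; apply: memSx.
pose N := (\max_i x i).+1.
have xN : forall i, x i < N by move=> i; rewrite ltnS leq_bigmax.
have anz : forall i, (alpha N (Sx x) (x i) != 0)%R.
  move=> i; apply: alpha_neq0 => //.
  by apply: (@struct_D (Sx x) R (x i)) => //; apply: memSx.
apply/det0P => -[v vn0 vM].
have hw : forall j, (\sum_i (v ord0 i * (x i)%:R) * ((gcdn (x i) (x j))%:R)^-1 = 0)%R.
  move=> j; have := congr1 (fun A : 'rV[rat]_n => A ord0 j) vM; rewrite !mxE => h.
  have e : forall k, (v ord0 k * (lcm_matrix x k j) =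
      (v ord0 k * (x k)%:R * ((gcdn (x k) (x j))%:R)^-1) * (x j)%:R)%R.
    by move=> k; rewrite mxE lcmE //; ring.
  rewrite (eq_bigr _ (fun k _ => e k)) -big_distrl /= in h.
  move/eqP: h; rewrite mulf_eq0 pnatr_eq0 eqn0Ngt xpos orbF => /eqP.
  done.
have w0 := kernel inj xpos xN gcl anz hw.
move/negP: vn0; apply; apply/eqP/rowP => i; rewrite mxE.
have := w0 i; move/eqP; rewrite mulf_eq0 pnatr_eq0 eqn0Ngt xpos orbF.
by move/eqP.
Qed.
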